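(* Let $M\in\mathbb{R}^{N\times N}$ be symmetric positive definite, and write $|v|_M^2=v^\intercal M v$. Let $f:\mathbb{R}^N\to\mathbb{R}^N$ satisfy: there is $L_f>0$ with $|f(x)-f(y)|_M\le L_f|x-y|_M$ for all $x,y\in K$, where $K\subset\mathbb{R}^N$ is the domain of the states. Fix a parameter $\mu$ and a final time $\tau>0$, and let $x(\cdot)=x(\cdot,\mu)$ solve the autonomous full-order model $\dot x(t)=f(x(t))$ on $[0,\tau]$. Let $U_\mu\in\mathbb{R}^{N\times n}$ be a local $M$-orthonormal basis, i.e. $U_\mu^\intercal M U_\mu=I$, with $M$-adjoint $U_\mu^*=U_\mu^\intercal M$, and let $\hat x(\cdot)=\hat x(\cdot,\mu)\in\mathbb{R}^n$ solve the Galerkin reduced-order model $\dot{\hat x}(t)=U_\mu^* f(U_\mu\hat x(t))$, $\hat x(0)=U_\mu^*x(0)$. Let $P_{U_\mu}^\perp=I-U_\mu U_\mu^*$. Then there is a constant $C(\tau)>0$ (depending only on $\tau$ and $L_f$) such that $$\|x(\mu)-U_\mu\hat x(\mu)\|_M\le\big(1+L_f\,C(\tau)\sqrt{\tau}\big)\,\|P_{U_\mu}^\perp x(\mu)\|_M,$$ where for a trajectory $z:[0,\tau]\to\mathbb{R}^N$, $\|z\|_M^2=\int_0^\tau |z(t)|_M^2\,dt$.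
   Context: $K$ is understood as a set of states containing all states at which $f$ is evaluated (the full-order trajectory, its $M$-orthogonal projection $U_\mu U_\mu^* x(t)$, and the reduced reconstruction $U_\mu \hat x(t)$). $P_{U_\mu}=U_\mu U_\mu^*$ is the $M$-orthogonal projection onto the column space of $U_\mu$. *)

(* Defs.v *)
From HB Require Import structures.
From mathcomp Require Import all_boot all_order all_algebra.
From mathcomp Require Import all_classical all_reals all_analysis.
Set Implicit Arguments. Unset Strict Implicit. Unset Printing Implicit Defensive.
Import Order.TTheory GRing.Theory Num.Theory.
Import numFieldNormedType.Exports.
Local Open Scope classical_set_scope.
Local Open Scope ring_scope.

Definition sqnormM {R : realType} {N : nat} (M : 'M[R]_N) (v : 'cV[R]_N) : R :=
  (v^T *m M *m v) 0 0.

Definition normM {R : realType} {N : nat} (M : 'M[R]_N) (v : 'cV[R]_N) : R :=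
  Num.sqrt (sqnormM M v).

Definition spd {R : realType} {N : nat} (M : 'M[R]_N) : Prop :=
  M^T = M /\ forall v : 'cV[R]_N, v != 0 -> 0 < sqnormM M v.

Definition Madj {R : realType} {N n : nat} (M : 'M[R]_N) (U : 'M[R]_(N, n))
  : 'M[R]_(n, N) := U^T *m M.

Definition trajnormM {R : realType} {N : nat} (M : 'M[R]_N) (tau : R)
  (z : R -> 'cV[R]_N) : R :=
  Num.sqrt (Rintegral lebesgue_measure `[0, tau] (fun t => sqnormM M (z t))).

(* Main.v *)
Require Import Defs.
From HB Require Import structures.
From mathcomp Require Import all_boot all_order all_algebra.
From mathcomp Require Import all_classical all_reals all_analysis.
From mathcomp Require Import ring lra.
Set Implicit Arguments. Unset Strict Implicit. Unset Printing Implicit Defensive.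
Import Order.TTheory GRing.Theory Num.Theory.
Import numFieldNormedType.Exports.
Local Open Scope classical_set_scope.
Local Open Scope ring_scope.

Section Alg.
Context {R : realType} {N : nat} (M : 'M[R]_N).
Hypothesis MT : M^T = M.

Definition bil (a b : 'cV[R]_N) : R := (a^T *m M *m b) 0 0.

Lemma bilC a b : bil a b = bil b a.
Proof.
rewrite /bil; have <- : (a^T *m M *m b)^T = b^T *m M *m a.
  by rewrite !trmx_mul trmxK MT mulmxA.
by rewrite [RHS]mxE.
Qed.

Lemma mxE_add m n (A B : 'M[R]_(m,n)) i j : (A + B) i j = A i j + B i j.
Proof. by rewrite mxE. Qed.

Lemma mxE_opp m n (A : 'M[R]_(m,n)) i j : (- A) i j = - A i j.
Proof. by rewrite mxE. Qed.

Lemma sq_add a b : sqnormM M (a + b) = sqnormM M a + sqnormM M b + 2 * bil a b.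
Proof.
rewrite /sqnormM [(a+b)^T]linearD /= !mulmxDl !mulmxDr !mxE_add.
have := bilC b a; rewrite /bil /sqnormM => ->. ring.
Qed.

Lemma sq_opp a : sqnormM M (- a) = sqnormM M a.
Proof. by rewrite /sqnormM [(-a)^T]linearN /= mulNmx mulmxN mulNmx opprK. Qed.

Lemma bilB a b c : bil a (b - c) = bil a b - bil a c.
Proof. by rewrite /bil mulmxBr mxE_add mxE_opp. Qed.

Lemma sqE a : sqnormM M a = bil a a.
Proof. by []. Qed.

Hypothesis Mpos : forall v : 'cV[R]_N, v != 0 -> 0 < sqnormM M v.

Lemma sq_ge0 v : 0 <= sqnormM M v.
Proof.
have [->|v0] := eqVneq v 0; last exact/ltW/Mpos.
by rewrite /sqnormM mulmx0 mxE.
Qed.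

Lemma sq_par a b : sqnormM M (a + b) <= 2 * sqnormM M a + 2 * sqnormM M b.
Proof.
have h1 := sq_add a b.
have h2 := sq_add a (- b).
rewrite sq_opp in h2.
have h3 : bil a (- b) = - bil a b.
  by rewrite -[- b]add0r bilB /bil mulmx0 mxE sub0r.
have := sq_ge0 (a + - b).
rewrite h2 h3 h1. lra.
Qed.

Variable (n : nat) (U : 'M[R]_(N, n)).
Hypothesis UO : U^T *m M *m U = 1%:M.

Lemma sqU (th : 'cV[R]_n) : sqnormM M (U *m th) = (th^T *m th) 0 0.
Proof.
rewrite /sqnormM trmx_mul.
have -> : th^T *m U^T *m M *m (U *m th) = th^T *m (U^T *m M *m U) *m th.
  by rewrite !mulmxA.
by rewrite UO mulmx1.
Qed.

Lemma proj_le (w : 'cV[R]_N) :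
  ((Madj M U *m w)^T *m (Madj M U *m w)) 0 0 <= sqnormM M w.
Proof.
set c := Madj M U *m w.
have -> : w = U *m c + (w - U *m c) by rewrite addrC subrK.
set v := U *m c.
rewrite sq_add bilB sqU.
have -> : bil v w = (c^T *m c) 0 0.
  by rewrite /bil /v /c /Madj trmx_mul !mulmxA.
rewrite -sqE sqU.
have := sq_ge0 (w - v). lra.
Qed.
End Alg.

Section Cont.
Context {R : realType} (T : topologicalType) (x0 : T).

Definition ce m n (z : T -> 'M[R]_(m,n)) :=
  forall i j, {for x0, continuous (fun t => z t i j)}.

Lemma ce_of m n (z : T -> 'M[R]_(m,n)) : {for x0, continuous z} -> ce z.
Proof.
move=> hz i j.
exact: (continuous_comp hz (@coord_continuous R m n i j (z x0))).
Qed.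

Lemma cont_ext (f g : T -> R) : (forall t, f t = g t) ->
  {for x0, continuous f} -> {for x0, continuous g}.
Proof. by move=> fg; have -> : f = g by apply/funext. Qed.

Lemma cont_sum k (F : 'I_k -> T -> R) :
  (forall i, {for x0, continuous (F i)}) ->
  {for x0, continuous (fun t => \sum_(i < k) F i t)}.
Proof.
elim: k F => [|k IH] F hF.
  apply: (@cont_ext (fun _ => 0)); first by move=> t; rewrite big_ord0.
  exact: cst_continuous.
apply: (@cont_ext (fun t => \sum_(i < k) F (widen_ord (leqnSn k) i) t + F ord_max t)).
  by move=> t; rewrite big_ord_recr.
apply: (@continuousD _ _ _ (fun t => \sum_(i < k) F (widen_ord (leqnSn k) i) t)
   (fun t => F ord_max t)).
  exact: IH.
exact: hF.
Qed.

Lemma ce_mm m n p (z : T -> 'M[R]_(m,n)) (w : T -> 'M[R]_(n,p)) :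
  ce z -> ce w -> ce (fun t => z t *m w t).
Proof.
move=> hz hw i j.
apply: (@cont_ext (fun t => \sum_k z t i k * w t k j)); first by move=> t; rewrite mxE.
apply: cont_sum => k.
exact: (@continuousM _ _ (fun t => z t i k) (fun t => w t k j)).
Qed.

Lemma ce_cst m n (A : 'M[R]_(m,n)) : ce (fun _ => A).
Proof. by move=> i j; exact: cst_continuous. Qed.

Lemma ce_add m n (z w : T -> 'M[R]_(m,n)) : ce z -> ce w -> ce (fun t => z t + w t).
Proof.
move=> hz hw i j.
apply: (@cont_ext (fun t => z t i j + w t i j)); first by move=> t; rewrite mxE.
exact: (@continuousD _ _ _ (fun t => z t i j) (fun t => w t i j)).
Qed.

Lemma ce_opp m n (z : T -> 'M[R]_(m,n)) : ce z -> ce (fun t => - z t).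
Proof.
move=> hz i j.
apply: (@cont_ext (fun t => - z t i j)); first by move=> t; rewrite mxE.
exact: (@continuousN _ _ _ (fun t => z t i j)).
Qed.

Lemma ce_sub m n (z w : T -> 'M[R]_(m,n)) : ce z -> ce w -> ce (fun t => z t - w t).
Proof. by move=> hz hw; apply: ce_add => //; exact: ce_opp. Qed.

Lemma ce_tr m n (z : T -> 'M[R]_(m,n)) : ce z -> ce (fun t => (z t)^T).
Proof.
move=> hz i j.
apply: (@cont_ext (fun t => z t j i)); first by move=> t; rewrite mxE.
exact: hz.
Qed.

Lemma ce_at m n (z : T -> 'M[R]_(m,n)) (i : 'I_m) (j : 'I_n) :
  ce z -> {for x0, continuous (fun t => z t i j)}.
Proof. by move=> h; exact: h. Qed.

End Cont.

Section Der.
Context {R : realType}.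

Lemma is_derive_ext (f g : R -> R) (t df dg : R) :
  (forall s, f s = g s) -> df = dg -> is_derive t 1 f df -> is_derive t 1 g dg.
Proof. by move=> fg <-; have -> : f = g by apply/funext. Qed.

Definition de m n (z : R -> 'M[R]_(m,n)) (dz : 'M[R]_(m,n)) (t : R) :=
  forall i j, is_derive t 1 (fun s => z s i j) (dz i j).

Lemma de_of m n (z : R -> 'M[R]_(m,n)) (dz : 'M[R]_(m,n)) (t : R) : is_derive t 1 z dz -> de z dz t.
Proof.
move=> [dz' dval] i j.
have := derive_mx dz'; rewrite dval => ->.
rewrite mxE; apply: DeriveDef => //.
by move/derivable_mxP: dz'; apply.
Qed.
Lemma de_mm m n p (z : R -> 'M[R]_(m,n)) (w : R -> 'M[R]_(n,p)) dz dw t :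
  de z dz t -> de w dw t -> de (fun s => z s *m w s) (dz *m w t + z t *m dw) t.
Proof.
move=> hz hw i j.
apply: (@is_derive_ext (\sum_(k < n) ((fun s => z s i k) * (fun s => w s k j))) _ t
  (\sum_(k < n) (z t i k *: dw k j + w t k j *: dz i k))).
- by move=> s; rewrite mxE fct_sumE.
- rewrite !mxE -big_split /=; apply: eq_bigr => k _.
  change (z t i k * dw k j + w t k j * dz i k = dz i k * w t k j + z t i k * dw k j).
  ring.
- apply: is_derive_sum => k; exact: (is_deriveM (hz i k) (hw k j)).
Qed.

Lemma de_cst m n (A : 'M[R]_(m,n)) t : de (fun _ => A) 0 t.
Proof.
move=> i j; rewrite mxE.
exact: (@is_derive_cst R R^o R^o (A i j) t 1).
Qed.

Lemma de_add m n (z w : R -> 'M[R]_(m,n)) dz dw t :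
  de z dz t -> de w dw t -> de (fun s => z s + w s) (dz + dw) t.
Proof.
move=> hz hw i j.
apply: (@is_derive_ext ((fun s => z s i j) + (fun s => w s i j)) _ t (dz i j + dw i j)).
- by move=> s; rewrite mxE.
- by rewrite mxE.
- exact: (is_deriveD (hz i j) (hw i j)).
Qed.

Lemma de_opp m n (z : R -> 'M[R]_(m,n)) dz t :
  de z dz t -> de (fun s => - z s) (- dz) t.
Proof.
move=> hz i j.
apply: (@is_derive_ext (- (fun s => z s i j)) _ t (- dz i j)).
- by move=> s; rewrite mxE.
- by rewrite mxE.
- exact: (is_deriveN (hz i j)).
Qed.

Lemma de_sub m n (z w : R -> 'M[R]_(m,n)) dz dw t :
  de z dz t -> de w dw t -> de (fun s => z s - w s) (dz - dw) t.
Proof. by move=> hz hw; apply: de_add => //; exact: de_opp. Qed.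

Lemma de_tr m n (z : R -> 'M[R]_(m,n)) dz t :
  de z dz t -> de (fun s => (z s)^T) (dz^T) t.
Proof.
move=> hz i j.
apply: (@is_derive_ext (fun s => z s j i) _ t (dz j i)).
- by move=> s; rewrite mxE.
- by rewrite mxE.
- exact: hz.
Qed.

Lemma de_lmul m n p (A : 'M[R]_(m,n)) (z : R -> 'M[R]_(n,p)) dz t :
  de z dz t -> de (fun s => A *m z s) (A *m dz) t.
Proof.
move=> hz i j.
have := de_mm (de_cst A t) hz i j.
by rewrite mul0mx add0r.
Qed.

Lemma de_at m n (z : R -> 'M[R]_(m,n)) dz t (i : 'I_m) (j : 'I_n) :
  de z dz t -> is_derive t 1 (fun s => z s i j) (dz i j).
Proof. by move=> h; exact: h. Qed.

Lemma hder (e g F : R -> R) (t de dg dF c : R) :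
  is_derive t 1 e de -> is_derive t 1 g dg -> is_derive t 1 F dF ->
  is_derive t 1 (fun s => e s * g s - c * F s) (e t * dg + g t * de - c * dF).
Proof.
move=> he hg hF.
apply: (@is_derive_ext ((e * g) - (c \*: F)) _ t (e t *: dg + g t *: de - c *: dF)) => //.
Qed.

Lemma lin_der (c t : R) : is_derive t 1 (fun s => c * s) c.
Proof.
apply: (@is_derive_ext (c \*: id) _ t (c *: 1)) => //.
by rewrite /GRing.scale /= mulr1.
Qed.

End Der.

Section Dot.
Context {R : realType}.
Lemma dot_sym n (a b : 'cV[R]_n) : (a^T *m b) 0 0 = (b^T *m a) 0 0.
Proof.
have <- : (a^T *m b)^T = b^T *m a by rewrite trmx_mul trmxK.
by rewrite [RHS]mxE.
Qed.

Lemma dot_le n (a b : 'cV[R]_n) (c : R) : 0 < c ->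
  2 * (a^T *m b) 0 0 <= c * (a^T *m a) 0 0 + (b^T *m b) 0 0 / c.
Proof.
move=> c0; rewrite !mxE mulr_sumr mulr_sumr mulr_suml -big_split /=.
apply: ler_sum => j _; rewrite !mxE.
rewrite -subr_ge0.
have -> : c * (a j 0 * a j 0) + b j 0 * b j 0 / c - 2 * (a j 0 * b j 0)
   = (c * a j 0 - b j 0) ^+ 2 / c.
  by field; rewrite gt_eqF.
by rewrite divr_ge0 ?sqr_ge0 ?ltW.
Qed.

Lemma dot_ge0 n (a : 'cV[R]_n) : 0 <= (a^T *m a) 0 0.
Proof. by rewrite mxE; apply: sumr_ge0 => j _; rewrite mxE -expr2 sqr_ge0. Qed.
Lemma sq_lip (a b L : R) : 0 <= a -> 0 <= b -> 0 <= L ->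
  Num.sqrt a <= L * Num.sqrt b -> a <= L ^+ 2 * b.
Proof.
move=> a0 b0 L0 h.
rewrite -(sqr_sqrtr a0) -(sqr_sqrtr b0).
have := sqrtr_ge0 a; have := sqrtr_ge0 b.
rewrite -exprMn; move=> h1 h2.
by rewrite ler_pXn2r// ?nnegrE// mulr_ge0.
Qed.

Lemma cont_of_der (m n : nat) (z : R -> 'M[R]_(m,n)) (t : R) (dz : 'M[R]_(m,n)) :
  is_derive t 1 z dz -> {for t, continuous z}.
Proof.
move=> [dz' _]; apply: differentiable_continuous.
exact/derivable1_diffP.
Qed.
End Dot.

Unset Implicit Arguments.
Theorem theorem3 (R : realType) (tau Lf : R) :
  0 < tau -> 0 < Lf ->
  exists C : R, 0 < C /\
  forall (N n : nat) (M : 'M[R]_N) (K : set 'cV[R]_N)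
         (f : 'cV[R]_N -> 'cV[R]_N) (U : 'M[R]_(N, n))
         (x : R -> 'cV[R]_N) (xh : R -> 'cV[R]_n),
    spd M ->
    (forall y z, K y -> K z -> normM M (f y - f z) <= Lf * normM M (y - z)) ->
    (* full-order model on [0, tau] *)
    {within `[0, tau], continuous x} ->
    (forall t, t \in `]0, tau[ -> is_derive t (1 : R) x (f (x t))) ->
    (* M-orthonormal basis *)
    U^T *m M *m U = 1%:M ->
    (* Galerkin reduced-order model *)
    xh 0 = Madj M U *m x 0 ->
    {within `[0, tau], continuous xh} ->
    (forall t, t \in `]0, tau[ ->
       is_derive t (1 : R) xh (Madj M U *m f (U *m xh t))) ->
    (* K contains all states at which f is evaluated *)
    (forall t, t \in `[0, tau] ->
       [/\ K (x t), K (U *m (Madj M U *m x t)) & K (U *m xh t)]) ->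
    trajnormM M tau (fun t => x t - U *m xh t)
      <= (1 + Lf * C * Num.sqrt tau)
         * trajnormM M tau (fun t => (1%:M - U *m Madj M U) *m x t).
Proof.
move=> tau0 Lf0.
set k := 2 + 4 * Lf * tau * expR (3 * Lf * tau).
have k0 : 0 < k.
  have := expR_gt0 (3 * Lf * tau).
  rewrite /k => e0; have : 0 < Lf * tau by rewrite mulr_gt0.
  nra.
exists (Num.sqrt k / (Lf * Num.sqrt tau)); split.
  by rewrite divr_gt0 ?mulr_gt0 ?sqrtr_gt0.
move=> N n M K f U x xh [MT Mpos] Lip cx dx UO xh0 cxh dxh HK.
set Ua := Madj M U.
set D := [set` `[0, tau]] : set R.
pose p t := (1%:M - U *m Ua) *m x t.
pose th t := Ua *m x t - xh t.
pose q t := sqnormM M (p t).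
pose g t := ((th t)^T *m th t) 0 0.
pose E t := sqnormM M (x t - U *m xh t).
pose F t := \int[lebesgue_measure]_(s in `[0, t]) q s.
pose P := F tau.
have q0 t : 0 <= q t by exact: sq_ge0.
have g0 t : 0 <= g t by exact: dot_ge0.
have Ele t : E t <= 2 * q t + 2 * g t.
  rewrite /E /q /g -(@sqU R N M n U UO).
  have -> : x t - U *m xh t = p t + U *m th t.
    rewrite /p /th mulmxBl mul1mx mulmxBr !mulmxA.
    by rewrite addrA subrK.
  exact: (@sq_par R N M MT Mpos).
have hx (t : subspace D) : ce t (x : subspace D -> 'cV[R]_N) := ce_of (cx t).
have hxh (t : subspace D) : ce t (xh : subspace D -> 'cV[R]_n) := ce_of (cxh t).
have hp (t : subspace D) : ce t (p : subspace D -> 'cV[R]_N).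
  exact: ce_mm (@ce_cst R _ t _ _ (1%:M - U *m Ua)) (hx t).
have hth (t : subspace D) : ce t (th : subspace D -> 'cV[R]_n).
  exact: ce_sub (ce_mm (@ce_cst R _ t _ _ Ua) (hx t)) (hxh t).
have cq : {within D, continuous q}.
  move=> t; exact: (ce_at (i:=0) (j:=0) (ce_mm (ce_mm (ce_tr (hp t)) (@ce_cst R _ t _ _ M)) (hp t))).
have cg : {within D, continuous g}.
  move=> t; exact: (ce_at (i:=0) (j:=0) (ce_mm (ce_tr (hth t)) (hth t))).
have cE : {within D, continuous E}.
  move=> t.
  have hd : ce t ((fun s => x s - U *m xh s) : subspace D -> 'cV[R]_N).
    exact: ce_sub (hx t) (ce_mm (@ce_cst R _ t _ _ U) (hxh t)).
  exact: (ce_at (i:=0) (j:=0) (ce_mm (ce_mm (ce_tr hd) (@ce_cst R _ t _ _ M)) hd)).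
have cD : compact D by exact: segment_compact.
have intq := continuous_compact_integrable cD cq.
have intg := continuous_compact_integrable cD cg.
have intE := continuous_compact_integrable cD cE.
have itvW t : t \in `]0, tau[ -> t \in `[0, tau].
  by rewrite !in_itv /= => /andP[/ltW -> /ltW ->].
have gder t : t \in `]0, tau[ ->
    exists dg, is_derive t 1 g dg /\ dg <= 3 * Lf * g t + 2 * Lf * q t.
  move=> tI.
  have dX := de_of (dx t tI).
  have dXh := de_of (dxh t tI).
  set w := f (x t) - f (U *m xh t).
  have dth : de th (Ua *m w) t.
    by have := de_sub (de_lmul Ua dX) dXh; rewrite /w mulmxBr.
  have dgm := de_mm (de_tr dth) dth.
  exists (((Ua *m w)^T *m th t + (th t)^T *m (Ua *m w)) 0 0); split.
    exact: (de_at 0 0 dgm).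
  rewrite mxE_add (dot_sym (Ua *m w)).
  have d2 := dot_le (th t) (Ua *m w) Lf0.
  have d3 := @proj_le R N M MT Mpos n U UO w.
  have [Kx _ Kxh] := HK t (itvW t tI).
  have d4 : sqnormM M w <= Lf ^+ 2 * E t.
    apply: sq_lip; [exact: sq_ge0|exact: sq_ge0|exact: ltW|exact: Lip].
  have d5 := Ele t.
  have d6 : ((Ua *m w)^T *m (Ua *m w)) 0 0 / Lf <= Lf * E t.
    rewrite ler_pdivrMr //.
    have -> : Lf * E t * Lf = Lf ^+ 2 * E t by rewrite expr2; ring.
    exact: le_trans d3 d4.
  have d7 : Lf * E t <= Lf * (2 * q t + 2 * g t) by rewrite ler_wpM2l // ltW.
  rewrite -/(g t) in d2. lra.
have Fder t : t \in `]0, tau[ -> is_derive t 1 F (q t).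
  move=> tI; move: (tI); rewrite in_itv /= => /andP[t0 tt].
  have cqt : {for t, continuous q}.
    have hxt : ce t x := ce_of (cont_of_der (dx t tI)).
    have hpt : ce t p := ce_mm (@ce_cst R _ t _ _ (1%:M - U *m Ua)) hxt.
    exact: (ce_at (i:=0) (j:=0) (ce_mm (ce_mm (ce_tr hpt) (@ce_cst R _ t _ _ M)) hpt)).
  have [dF F'] := continuous_FTC1_closed tt intq t0 cqt.
  by apply: DeriveDef => //; rewrite -derive1E.
pose e (s : R) := expR (- (3 * Lf) * s).
have eder (s : R) : is_derive s 1 e (expR (- (3 * Lf) * s) * (- (3 * Lf))).
  exact: (is_derive1_comp (is_derive_expR _) (lin_der _ s)).
pose h s := e s * g s - (2 * Lf) * F s.
have hdr t : t \in `]0, tau[ -> exists dh, is_derive t 1 h dh /\ dh <= 0.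
  move=> tI; have [dg [Hg dgle]] := gder t tI.
  exists (e t * dg + g t * (e t * (- (3 * Lf))) - (2 * Lf) * q t); split.
    exact: (@hder R e g F t _ _ _ (2 * Lf) (eder t) Hg (Fder t tI)).
  move: (tI); rewrite in_itv /= => /andP[t0 tt].
  have e1 : e t <= 1.
    rewrite /e expR_le1; have : 0 < Lf * t by rewrite mulr_gt0.
    nra.
  have e0 : 0 <= e t := expR_ge0 _.
  have H1 : e t * dg <= e t * (3 * Lf * g t + 2 * Lf * q t) := ler_wpM2l e0 dgle.
  have H2 : 0 <= Lf * q t * (1 - e t).
    by rewrite mulr_ge0 ?mulr_ge0 ?subr_ge0 ?(ltW Lf0).
  have := q0 t; have := g0 t.
  nra.
have ce_ : continuous e.
  move=> s; apply: differentiable_continuous; apply/derivable1_diffP.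
  by case: (eder s).
have cF : {within D, continuous F}.
  exact: (parameterized_integral_continuous (ltW tau0) intq).
have hc : {within D, continuous h}.
  move=> t.
  have c1 : {for t, continuous (e : subspace D -> R)}.
    exact: (@continuous_subspaceT _ _ D e ce_ t).
  have c2 : {for t, continuous ((fun _ => 2 * Lf) : subspace D -> R)}.
    exact: cst_continuous.
  have c3 : {for t, continuous (g : subspace D -> R)} := cg t.
  have c4 : {for t, continuous (F : subspace D -> R)} := cF t.
  have := continuousB (continuousM c1 c3) (continuousM c2 c4).
  by apply: cont_ext.
have hmono := @ler0_derive1_nincr R h 0 tau.
have h0 : h 0 = 0.
  rewrite /h /g /th /F xh0 /Ua subrr set_itv1 Rintegral_set1.
  by rewrite mulr0 [X in _ * X]mxE big1 ?mulr0 ?subr0 // => j _; rewrite !mxE mul0r.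
have hd1 : forall s, s \in `]0, tau[ -> derivable h s 1.
  by move=> s sI; have [dh [Hd _]] := hdr s sI; case: Hd.
have hd2 : forall s, s \in `]0, tau[ -> derive1 h s <= 0.
  move=> s sI; have [dh [Hd hl]] := hdr s sI.
  by case: Hd => _ Hv; rewrite derive1E Hv.
have hle t : 0 <= t -> t <= tau -> h t <= 0.
  by move=> t0 tt; rewrite -h0; exact: (hmono hd1 hd2 hc 0 t (lexx 0) t0 tt).
have F0 t : 0 <= F t by apply: Rintegral_ge0 => s _; exact: q0.
have Fle t : 0 <= t -> t <= tau -> F t <= P.
  move=> t0 tt.
  have := @Rintegral_itvB R q (BLeft 0) (BRight tau) t intq.
  rewrite !bnd_simp => /(_ t0 tt) HB.
  rewrite -subr_ge0 /P /F HB.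
  by apply: Rintegral_ge0 => s _; exact: q0.
set B := 2 * Lf * expR (3 * Lf * tau) * P.
have gb t : 0 <= t -> t <= tau -> g t <= B.
  move=> t0 tt; have := hle t t0 tt; rewrite /h => hl.
  have eg : g t = expR (3 * Lf * t) * (e t * g t).
    by rewrite mulrA /e -expRD mulNr addrN expR0 mul1r.
  have ex : expR (3 * Lf * t) <= expR (3 * Lf * tau).
    rewrite ler_expR; apply: ler_wpM2l => //; rewrite mulr_ge0 // ltW //.
  have E0 := expR_ge0 (3 * Lf * t).
  have H1 : expR (3 * Lf * t) * (e t * g t) <= expR (3 * Lf * t) * (2 * Lf * F t).
    by apply: ler_wpM2l => //; lra.
  have H2 : expR (3 * Lf * t) * F t <= expR (3 * Lf * tau) * P.
    by apply: ler_pM => //; exact: Fle.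
  rewrite eg /B; nra.
have intC (phi : R -> R) : {within D, continuous phi} ->
    lebesgue_measure.-integrable D (EFin \o phi).
  exact: continuous_compact_integrable cD.
have c2q : {within D, continuous (fun t => 2 * q t)}.
  move=> t; have c2 : {for t, continuous ((fun _ => 2) : subspace D -> R)}.
    exact: cst_continuous.
  exact: (continuousM c2 (cq t)).
have cB : {within D, continuous (fun _ : R => 2 * B)}.
  by move=> t; exact: cst_continuous.
have c2qB : {within D, continuous (fun t => 2 * q t + 2 * B)}.
  move=> t; exact: (continuousD (c2q t) (cB t)).
have I1 : \int[lebesgue_measure]_(t in D) E t <=
          \int[lebesgue_measure]_(t in D) (2 * q t + 2 * B).
  apply: le_Rintegral; [exact: measurable_itv|exact: intE|exact: (intC _ c2qB)|].
  move=> t; rewrite /D /= in_itv /= => /andP[t0 tt].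
  have := Ele t; have := gb t t0 tt; lra.
have I2 : \int[lebesgue_measure]_(t in D) (2 * q t + 2 * B) = 2 * P + 2 * B * tau.
  rewrite RintegralD; [|exact: measurable_itv|exact: (intC _ c2q)|exact: (intC _ cB)].
  rewrite RintegralZl; [|exact: measurable_itv|exact: intq].
  rewrite Rintegral_cst; last exact: measurable_itv.
  rewrite (_ : fine _ = tau); last first.
    have mE : lebesgue_measure ([set` `[0, tau]] : set R) = tau%:E.
      rewrite lebesgue_measure_itv /= lte_fin tau0 /=.
      by rewrite oppr0 adde0.
    exact: (congr1 fine mE).
  by rewrite -mulrA.
have -> : trajnormM M tau (fun t => x t - U *m xh t) =
    Num.sqrt (\int[lebesgue_measure]_(t in D) E t) by [].
have -> : trajnormM M tau (fun t => (1%:M - U *m Ua) *m x t) = Num.sqrt P by [].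
have IE : \int[lebesgue_measure]_(t in D) E t <= k * P.
  apply: (le_trans I1); rewrite I2 /B /k.
  by rewrite le_eqVlt; apply/orP; left; apply/eqP; ring.
apply: (le_trans (ler_wsqrtr IE)).
rewrite sqrtrM ?(ltW k0) //.
have st0 : 0 < Num.sqrt tau by rewrite sqrtr_gt0.
have -> : Lf * (Num.sqrt k / (Lf * Num.sqrt tau)) * Num.sqrt tau = Num.sqrt k.
  by field; rewrite ?gt_eqF ?mulr_gt0 ?andbT.
apply: ler_wpM2r; first exact: sqrtr_ge0.
by rewrite lerDr.
Qed.
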